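(* Let $\lambda\in\mathbb{C}$ and let $u,v:\mathbb{Z}^2\to\mathbb{C}$ satisfy, for all $(l,m)\in\mathbb{Z}^2$ (with all denominators nonzero), \[ \widetilde{\overline u}-u-\frac1{\widetilde u}+\frac1{\overline u}=0,\qquad u-\widetilde{\overline v}-\frac1{\overline u}+\frac{\lambda}{\widetilde v}=0, \] \[ (u-v)\Big(\frac1u+\widetilde v\Big)-1+\lambda=0,\qquad \frac1u-\frac{\lambda}{v}-\overline u+\overline v=0. \] Then $v$ satisfies, for all $(l,m)\in\mathbb{Z}^2$, \[ \big(v\,\overline v-\widetilde v\,\widetilde{\overline v}\big)^2+\big(v-\widetilde{\overline v}\big)\big(\overline v-\widetilde v\big)\big(\lambda-v\,\overline v\big)\big(\lambda-\widetilde v\,\widetilde{\overline v}\big)=0. \]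
   Context: Shift notation: for $f:\mathbb{Z}^2\to\mathbb{C}$, $f=f_{l,m}$, $\overline f=f_{l+1,m}$, $\widetilde f=f_{l,m+1}$, $\widetilde{\overline f}=f_{l+1,m+1}$. *)

(* Defs.v *)
From mathcomp Require Import all_boot all_order all_algebra.
From mathcomp Require Import all_classical all_reals.
From mathcomp Require Export complex.
Set Implicit Arguments. Unset Strict Implicit. Unset Printing Implicit Defensive.
Import GRing.Theory Num.Theory.
Local Open Scope ring_scope.
Local Open Scope complex_scope.

Definition lattice_fun (R : realType) := int -> int -> R[i].

(* Main.v *)
Require Import Defs.
From mathcomp Require Import all_boot all_order all_algebra.
From mathcomp Require Import all_classical all_reals.
From mathcomp Require Import complex.
From mathcomp Require Import ring.
Import GRing.Theory Num.Theory.
Local Open Scope ring_scope.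
Local Open Scope complex_scope.

Theorem mainTheorem4 (R : realType) (lam : R[i]) (u v : int -> int -> R[i])
  (hu : forall l m, u l m != 0) (hv : forall l m, v l m != 0)
  (E1 : forall l m,
     u (l + 1) (m + 1) - u l m - (u l (m + 1))^-1 + (u (l + 1) m)^-1 = 0)
  (E2 : forall l m,
     u l m - v (l + 1) (m + 1) - (u (l + 1) m)^-1 + lam / v l (m + 1) = 0)
  (E3 : forall l m,
     (u l m - v l m) * ((u l m)^-1 + v l (m + 1)) - 1 + lam = 0)
  (E4 : forall l m,
     (u l m)^-1 - lam / v l m - u (l + 1) m + v (l + 1) m = 0) :
  forall l m,
    (v l m * v (l + 1) m - v l (m + 1) * v (l + 1) (m + 1)) ^+ 2
    + (v l m - v (l + 1) (m + 1)) * (v (l + 1) m - v l (m + 1))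
      * (lam - v l m * v (l + 1) m) * (lam - v l (m + 1) * v (l + 1) (m + 1)) = 0.
Proof.
move=> l m.
set x := u l m; set ub := u (l + 1) m.
set v0 := v l m; set vb := v (l + 1) m; set vt := v l (m + 1); set vbt := v (l + 1) (m + 1).
have hx : x != 0 by apply: hu.
have hub : ub != 0 by apply: hu.
have hv0 : v0 != 0 by apply: hv.
have hvt : vt != 0 by apply: hv.
have e3 := E3 l m; have e2 := E2 l m; have e4 := E4 l m.
rewrite -/x -/v0 -/vt in e3.
rewrite -/x -/vbt -/ub -/vt in e2.
rewrite -/x -/v0 -/ub -/vb in e4.
have e4' : ub = x^-1 - lam / v0 + vb.
  by apply/eqP; rewrite eq_sym -subr_eq0; apply/eqP; rewrite -e4; ring.
have e2' : ub^-1 = x - vbt + lam / vt.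
  by apply/eqP; rewrite eq_sym -subr_eq0; apply/eqP; rewrite -e2; ring.
pose A := v0 * vb - lam; pose B := lam - vt * vbt.
pose f0 := - v0; pose f1 := lam - v0 * vt; pose f2 := vt.
pose g0 := B * v0; pose g1 := A * B; pose g2 := A * vt.
have hf : f2 * x ^+ 2 + f1 * x + f0 = 0.
  have -> : f2 * x ^+ 2 + f1 * x + f0
     = x * ((x - v0) * (x^-1 + vt) - 1 + lam) by rewrite /f2 /f1 /f0; field.
  by rewrite e3 mulr0.
have hg : g2 * x ^+ 2 + g1 * x + g0 = 0.
  have -> : g2 * x ^+ 2 + g1 * x + g0
     = v0 * vt * x * ((x^-1 - lam / v0 + vb) * (x - vbt + lam / vt) - 1).
    by rewrite /g2 /g1 /g0 /A /B; field; rewrite hvt hv0 hx.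
  by rewrite -e4' -e2' mulfV // subrr mulr0.
pose Q := f2 * g0 - g2 * f0; pose P := f2 * g1 - g2 * f1;
pose S := f1 * g0 - g1 * f0.
set G := (X in X = 0).
have key : x ^+ 2 * (v0 ^+ 2 * vt ^+ 2 * G)
   = Q * (g0 * (f2 * x ^+ 2 + f1 * x + f0) - f0 * (g2 * x ^+ 2 + g1 * x + g0))
     - x * S * (f2 * (g2 * x ^+ 2 + g1 * x + g0) - g2 * (f2 * x ^+ 2 + f1 * x + f0)).
  by rewrite /G /Q /P /S /f0 /f1 /f2 /g0 /g1 /g2 /A /B; ring.
rewrite hf hg !(mulr0, subr0) in key.
apply/eqP; move/eqP: key.
by rewrite !mulf_eq0 (negbTE hx) (negbTE hv0) (negbTE hvt).

Qed.
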